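(* Let $s\ge 1/4$ and $1\le p\le\infty$ with $p'(s+1/4)>1$. Let $S_1$ be the trilinear operator on sequences on $\mathbb{Z}$ $$S_1(a_1,a_2,a_3)(n)=\sum_{\substack{n_1+n_2+n_3=n\\ n_i\neq n,\ i=1,2,3}} m_1(n_1,n_2,n_3)\prod_{k=1}^3a_k(n_k),\qquad m_1(n_1,n_2,n_3)=\frac{\langle n\rangle^s|n|}{\prod_{k=1}^3\langle n_k\rangle^s\langle n-n_k\rangle^{1/2}},$$ where $n=n_1+n_2+n_3$. Then there is $C<\infty$ with $\|S_1(a_1,a_2,a_3)\|_{\ell^p}\le C\prod_{k=1}^3\|a_k\|_{\ell^p}$ for all $a_1,a_2,a_3\in\ell^p(\mathbb{Z})$.
   Context: $\langle x\rangle=(1+x^2)^{1/2}$; $p'$ is the conjugate exponent of $p$. *)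

(* Defs.v *)
From Stdlib Require Import Reals Lra ZArith.
Open Scope R_scope.

Definition japan (x : R) : R := sqrt (1 + x ^ 2).

(* x^y for x >= 0, y > 0, with the convention 0^y = 0 (Stdlib's Rpower 0 y = 1). *)
Definition rpow (x y : R) : R := if Rlt_dec 0 x then Rpower x y else 0.

Inductive expo : Type := Fin (p : R) | Infty.

Definition valid_expo (p : expo) : Prop :=
  match p with Fin r => 1 <= r | Infty => True end.

Definition conj_expo (p : expo) : expo :=
  match p with
  | Infty => Fin 1
  | Fin r => if Req_EM_T r 1 then Infty else Fin (r / (r - 1))
  end.

(* q * x > 1, with the convention infinity * x = +infinity if x > 0. *)
Definition expo_mul_gt1 (q : expo) (x : R) : Prop :=
  match q with Fin r => r * x > 1 | Infty => x > 0 end.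

(* Symmetric finite sum over n in [-N, N]. *)
Definition zsum (N : nat) (f : Z -> R) : R :=
  sum_f_R0 (fun i => f (Z.of_nat i - Z.of_nat N)%Z) (2 * N).

Definition zsum2 (N : nat) (g : Z -> Z -> R) : R :=
  zsum N (fun n1 => zsum N (fun n2 => g n1 n2)).

(* lp_le p a M :  ||a||_{l^p(Z)} <= M  (in particular a is in l^p). *)
Definition lp_le (p : expo) (a : Z -> R) (M : R) : Prop :=
  match p with
  | Fin r => forall N : nat, rpow (zsum N (fun n => rpow (Rabs (a n)) r)) (/ r) <= M
  | Infty => forall n : Z, Rabs (a n) <= M
  end.

Definition m1 (s : R) (n1 n2 n3 : Z) : R :=
  let n := (n1 + n2 + n3)%Z in
  Rpower (japan (IZR n)) s * Rabs (IZR n) /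
  ( Rpower (japan (IZR n1)) s * Rpower (japan (IZR (n - n1))) (1/2)
  * Rpower (japan (IZR n2)) s * Rpower (japan (IZR (n - n2))) (1/2)
  * Rpower (japan (IZR n3)) s * Rpower (japan (IZR (n - n3))) (1/2)).

Definition S1_term (s : R) (a1 a2 a3 : Z -> R) (n n1 n2 : Z) : R :=
  let n3 := (n - n1 - n2)%Z in
  if (Z.eqb n1 n || Z.eqb n2 n || Z.eqb n3 n)%bool then 0
  else m1 s n1 n2 n3 * (a1 n1 * a2 n2 * a3 n3).

(* b = S_1(a1,a2,a3): for every n the defining double series converges
   absolutely and its sum is b n. *)
Definition S1_is (s : R) (a1 a2 a3 : Z -> R) (b : Z -> R) : Prop :=
  forall n : Z,
    (exists B : R, forall N : nat, zsum2 N (fun n1 n2 => Rabs (S1_term s a1 a2 a3 n n1 n2)) <= B)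
    /\ Un_cv (fun N => zsum2 N (S1_term s a1 a2 a3 n)) (b n).

(* Main.v *)
Require Import Defs.
From Stdlib Require Import Reals Lra Lia ZArith Psatz.
Open Scope R_scope.


Lemma zsum_le N f g : (forall n, f n <= g n) -> zsum N f <= zsum N g.
Proof. intros H; unfold zsum; apply sum_Rle; intros; apply H. Qed.

Lemma zsum_plus N f g : zsum N (fun n => f n + g n) = zsum N f + zsum N g.
Proof. unfold zsum; apply plus_sum. Qed.

Lemma zsum_minus N f g : zsum N (fun n => f n - g n) = zsum N f - zsum N g.
Proof. unfold zsum; apply minus_sum. Qed.

Lemma zsum_scal N c f : zsum N (fun n => c * f n) = c * zsum N f.
Proof. unfold zsum; rewrite scal_sum; apply sum_eq; intros; ring. Qed.

Lemma zsum_ext N f g : (forall n, f n = g n) -> zsum N f = zsum N g.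
Proof. intros H; unfold zsum; apply sum_eq; intros; apply H. Qed.

Lemma zsum_nonneg N f : (forall n, 0 <= f n) -> 0 <= zsum N f.
Proof. intros H; unfold zsum; apply cond_pos_sum; intros; apply H. Qed.

Definition isum (a : Z) (len : nat) (f : Z -> R) : R :=
  sum_f_R0 (fun i => f (a + Z.of_nat i)%Z) len.

Lemma zsum_isum N f : zsum N f = isum (- Z.of_nat N) (2 * N) f.
Proof. unfold zsum, isum; apply sum_eq; intros; f_equal; lia. Qed.

Lemma isum_tele f H : (forall y, f y <= H (y + 1)%Z - H y) ->
  forall a len, isum a len f <= H (a + Z.of_nat len + 1)%Z - H a.
Proof.
  intros Hf a len; induction len as [|len IH]; unfold isum in *.
  - simpl. specialize (Hf a). replace (a + 0)%Z with a by lia.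
    replace (a + 0 + 1)%Z with (a + 1)%Z by lia. lra.
  - rewrite tech5. specialize (Hf (a + Z.of_nat (S len))%Z).
    replace (a + Z.of_nat len + 1)%Z with (a + Z.of_nat (S len))%Z in IH by lia.
    lra.
Qed.

Lemma isum_ext_right f a len d : (forall y, 0 <= f y) ->
  isum a len f <= isum a (len + d) f.
Proof.
  intros Hf; induction d as [|d IH].
  - rewrite Nat.add_0_r; lra.
  - replace (len + S d)%nat with (S (len + d)) by lia.
    unfold isum in *; rewrite tech5. specialize (Hf (a + Z.of_nat (S (len + d)))%Z). lra.
Qed.

Lemma isum_ext_left1 f a len : (forall y, 0 <= f y) ->
  isum a len f <= isum (a - 1) (S len) f.
Proof.
  intros Hf; unfold isum. rewrite (decomp_sum _ (S len)) by lia. simpl pred.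
  assert (E: sum_f_R0 (fun i => f (a - 1 + Z.of_nat (S i))%Z) len =
             sum_f_R0 (fun i => f (a + Z.of_nat i)%Z) len).
  { apply sum_eq; intros; f_equal; lia. }
  rewrite E. specialize (Hf (a - 1 + Z.of_nat 0)%Z). lra.
Qed.

Lemma isum_ext_left f a len d : (forall y, 0 <= f y) ->
  isum a len f <= isum (a - Z.of_nat d) (len + d) f.
Proof.
  intros Hf; induction d as [|d IH].
  - replace (a - Z.of_nat 0)%Z with a by lia. rewrite Nat.add_0_r; lra.
  - eapply Rle_trans; [apply IH|].
    replace (a - Z.of_nat (S d))%Z with (a - Z.of_nat d - 1)%Z by lia.
    replace (len + S d)%nat with (S (len + d)) by lia.
    apply isum_ext_left1; auto.
Qed.

Lemma isum_contain f a len a' len' : (forall y, 0 <= f y) ->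
  (a' <= a)%Z -> (a + Z.of_nat len <= a' + Z.of_nat len')%Z ->
  isum a len f <= isum a' len' f.
Proof.
  intros Hf H1 H2.
  set (d := Z.to_nat (a - a')).
  eapply Rle_trans; [apply (isum_ext_left f a len d Hf)|].
  replace (a - Z.of_nat d)%Z with a' by (unfold d; lia).
  replace len' with ((len + d) + (len' - (len + d)))%nat by (unfold d; lia).
  apply isum_ext_right; auto.
Qed.

Lemma zsum_shift f N c G : (forall y, 0 <= f y) -> (forall M, zsum M f <= G) ->
  zsum N (fun k => f (k + c)%Z) <= G.
Proof.
  intros Hf HG.
  set (M := (N + Z.abs_nat c)%nat).
  eapply Rle_trans; [|apply (HG M)].
  rewrite (zsum_isum M).
  assert (E: zsum N (fun k => f (k + c)%Z) = isum (c - Z.of_nat N) (2 * N) f).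
  { unfold zsum, isum; apply sum_eq; intros; f_equal; lia. }
  rewrite E. apply isum_contain; auto; unfold M; lia.
Qed.

Lemma zsum_mono f N M : (forall y, 0 <= f y) -> (N <= M)%nat -> zsum N f <= zsum M f.
Proof.
  intros Hf H. rewrite !zsum_isum. apply isum_contain; auto; lia.
Qed.

Lemma zsum_single f N n : (forall y, 0 <= f y) -> (Z.abs_nat n <= N)%nat -> f n <= zsum N f.
Proof.
  intros Hf H. rewrite zsum_isum.
  assert (E: f n = isum n 0 f) by (unfold isum; simpl; f_equal; lia).
  rewrite E. apply isum_contain; auto; lia.
Qed.

Lemma sum_swap (h : nat -> nat -> R) n m :
  sum_f_R0 (fun i => sum_f_R0 (fun j => h i j) n) m =
  sum_f_R0 (fun j => sum_f_R0 (fun i => h i j) m) n.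
Proof.
  induction m as [|m IH]; simpl.
  - reflexivity.
  - rewrite IH, <- plus_sum. reflexivity.
Qed.

Lemma zsum2_swap N (g : Z -> Z -> R) :
  zsum N (fun a => zsum N (fun b => g a b)) = zsum N (fun b => zsum N (fun a => g a b)).
Proof. unfold zsum; apply sum_swap. Qed.

Lemma zsum2_le N g h : (forall a b, g a b <= h a b) -> zsum2 N g <= zsum2 N h.
Proof. intros H; unfold zsum2; apply zsum_le; intros; apply zsum_le; auto. Qed.

Lemma zsum2_plus N g h : zsum2 N (fun a b => g a b + h a b) = zsum2 N g + zsum2 N h.
Proof. unfold zsum2. rewrite <- zsum_plus. apply zsum_ext; intros; apply zsum_plus. Qed.

Lemma zsum2_minus N g h : zsum2 N (fun a b => g a b - h a b) = zsum2 N g - zsum2 N h.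
Proof. unfold zsum2. rewrite <- zsum_minus. apply zsum_ext; intros; apply zsum_minus. Qed.

Lemma zsum2_scal N c g : zsum2 N (fun a b => c * g a b) = c * zsum2 N g.
Proof. unfold zsum2. rewrite <- zsum_scal. apply zsum_ext; intros; apply zsum_scal. Qed.

Lemma zsum2_nonneg N g : (forall a b, 0 <= g a b) -> 0 <= zsum2 N g.
Proof. intros H; unfold zsum2; apply zsum_nonneg; intros; apply zsum_nonneg; auto. Qed.

Lemma zsum2_mono N M g : (forall a b, 0 <= g a b) -> (N <= M)%nat -> zsum2 N g <= zsum2 M g.
Proof.
  intros H HNM; unfold zsum2.
  eapply Rle_trans.
  - apply zsum_le. intros a. apply (zsum_mono (fun b => g a b) N M); auto.
  - apply zsum_mono; auto. intros; apply zsum_nonneg; auto.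
Qed.


Lemma exp_le_compat x y : x <= y -> exp x <= exp y.
Proof. intros [H|H]; [left; apply exp_increasing; auto| subst; lra]. Qed.

Lemma exp_le_inv x y : exp x <= exp y -> x <= y.
Proof. intros [H|H]; [left; apply exp_lt_inv; auto| right; apply exp_inv; auto]. Qed.

Lemma ln_le_compat x y : 0 < x -> x <= y -> ln x <= ln y.
Proof. intros Hx [H|H]; [left; apply ln_increasing; auto| subst; lra]. Qed.

Lemma rpow_nonneg x y : 0 <= rpow x y.
Proof. unfold rpow; destruct (Rlt_dec 0 x); [unfold Rpower; left; apply exp_pos| lra]. Qed.

Lemma rpow_pos x y : 0 < x -> rpow x y = exp (y * ln x).
Proof. intros H; unfold rpow; destruct (Rlt_dec 0 x); [reflexivity|lra]. Qed.

Lemma rpow_zero x y : x <= 0 -> rpow x y = 0.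
Proof. intros H; unfold rpow; destruct (Rlt_dec 0 x); [lra|reflexivity]. Qed.

Lemma rpow_1 x : 0 <= x -> rpow x 1 = x.
Proof.
  intros [H|H]. rewrite rpow_pos by auto. rewrite Rmult_1_l, exp_ln; auto.
  subst; apply rpow_zero; lra.
Qed.

Lemma rpow_le x y e : 0 <= x <= y -> 0 < e -> rpow x e <= rpow y e.
Proof.
  intros [[H0|H0] H1] He.
  - rewrite !rpow_pos by lra. apply exp_le_compat.
    apply Rmult_le_compat_l; [lra|]. apply ln_le_compat; lra.
  - subst. rewrite (rpow_zero 0) by lra. apply rpow_nonneg.
Qed.

Lemma rpow_mult x y e : 0 <= x -> 0 <= y -> rpow (x * y) e = rpow x e * rpow y e.
Proof.
  intros [Hx|Hx] [Hy|Hy].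
  - rewrite !rpow_pos by (try apply Rmult_lt_0_compat; auto).
    rewrite ln_mult by auto. rewrite <- exp_plus. f_equal; ring.
  - subst. rewrite Rmult_0_r, (rpow_zero 0 e) by lra. ring.
  - subst. rewrite Rmult_0_l, (rpow_zero 0 e) by lra. ring.
  - subst. rewrite Rmult_0_l, (rpow_zero 0 e) by lra. ring.
Qed.

Lemma rpow_rpow x a b : 0 <= x -> rpow (rpow x a) b = rpow x (a * b).
Proof.
  intros [Hx|Hx].
  - rewrite (rpow_pos x a) by auto. rewrite rpow_pos by apply exp_pos.
    rewrite rpow_pos by auto. rewrite ln_exp. f_equal; ring.
  - subst. rewrite (rpow_zero 0 a) by lra. rewrite (rpow_zero 0 b) by lra. apply eq_sym, rpow_zero; lra.
Qed.

Lemma rpow_exp x e : rpow (exp x) e = exp (e * x).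
Proof. rewrite rpow_pos by apply exp_pos. rewrite ln_exp; auto. Qed.

Lemma exp_convex th x y : 0 <= th <= 1 ->
  exp (th * x + (1 - th) * y) <= th * exp x + (1 - th) * exp y.
Proof.
  intros Hth. set (z := th * x + (1 - th) * y).
  assert (Ex : exp x = exp z * exp (x - z)) by (rewrite <- exp_plus; f_equal; ring).
  assert (Ey : exp y = exp z * exp (y - z)) by (rewrite <- exp_plus; f_equal; ring).
  pose proof (exp_ineq1_le (x - z)). pose proof (exp_ineq1_le (y - z)).
  pose proof (exp_pos z).
  rewrite Ex, Ey.
  assert (th * (exp z * exp (x - z)) >= th * (exp z * (1 + (x - z)))).
  { apply Rle_ge, Rmult_le_compat_l; [lra|]. apply Rmult_le_compat_l; lra. }
  assert ((1-th) * (exp z * exp (y - z)) >= (1-th) * (exp z * (1 + (y - z)))).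
  { apply Rle_ge, Rmult_le_compat_l; [lra|]. apply Rmult_le_compat_l; lra. }
  assert (th * (exp z * (1 + (x - z))) + (1-th) * (exp z * (1 + (y - z))) = exp z).
  { unfold z; ring. }
  lra.
Qed.

Lemma young a b q r : 0 <= a -> 0 <= b -> 0 < q -> 0 < r -> / q + / r = 1 ->
  a * b <= rpow a q / q + rpow b r / r.
Proof.
  intros Ha Hb Hq Hr Hqr.
  assert (0 <= rpow a q / q) by (apply Rmult_le_pos; [apply rpow_nonneg| left; apply Rinv_0_lt_compat; auto]).
  assert (0 <= rpow b r / r) by (apply Rmult_le_pos; [apply rpow_nonneg| left; apply Rinv_0_lt_compat; auto]).
  destruct Ha as [Ha|Ha]; [|subst; lra].
  destruct Hb as [Hb|Hb]; [|subst; lra].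
  rewrite !rpow_pos by auto.
  assert (E: a * b = exp (/ q * (q * ln a) + (1 - / q) * (r * ln b))).
  { rewrite <- (exp_ln a) at 1 by auto. rewrite <- (exp_ln b) at 1 by auto.
    rewrite <- exp_plus. f_equal. replace (1 - / q) with (/ r) by lra. field; lra. }
  rewrite E.
  assert (0 <= / q <= 1).
  { split; [left; apply Rinv_0_lt_compat; auto|].
    assert (0 < / r) by (apply Rinv_0_lt_compat; auto). lra. }
  eapply Rle_trans; [apply exp_convex; auto|].
  replace (1 - / q) with (/ r) by lra. unfold Rdiv. lra.
Qed.

Lemma holder2 K (w c : Z -> Z -> R) q r W :
  0 < q -> 0 < r -> / q + / r = 1 -> 0 < W ->
  (forall a b, 0 <= w a b) -> (forall a b, 0 <= c a b) ->
  zsum2 K (fun a b => rpow (w a b) q) <= W ->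
  rpow (zsum2 K (fun a b => w a b * c a b)) r
   <= rpow W (r - 1) * zsum2 K (fun a b => rpow (c a b) r).
Proof.
  intros Hq Hr Hqr HW Hw Hc HWq.
  set (X := zsum2 K (fun a b => w a b * c a b)).
  set (Y := zsum2 K (fun a b => rpow (c a b) r)).
  assert (HX0 : 0 <= X) by (apply zsum2_nonneg; intros; apply Rmult_le_pos; auto).
  assert (HY0 : 0 <= Y) by (apply zsum2_nonneg; intros; apply rpow_nonneg).
  assert (Hgen : forall t, 0 < t -> X <= rpow t q * W / q + rpow t (-r) * Y / r).
  { intros t Ht. unfold X, Y.
    eapply Rle_trans.
    - apply zsum2_le with (h := fun a b => rpow (t * w a b) q / q + rpow (c a b / t) r / r).
      intros a b.
      replace (w a b * c a b) with ((t * w a b) * (c a b / t)) by (field; lra).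
      apply young; auto.
      + apply Rmult_le_pos; auto; lra.
      + apply Rmult_le_pos; auto. left; apply Rinv_0_lt_compat; auto.
    - rewrite zsum2_plus.
      assert (E1 : zsum2 K (fun a b => rpow (t * w a b) q / q) =
                   rpow t q / q * zsum2 K (fun a b => rpow (w a b) q)).
      { rewrite <- zsum2_scal. unfold zsum2; apply zsum_ext; intros; cbv beta; apply zsum_ext; intros; cbv beta.
        rewrite rpow_mult by (auto; lra). field; lra. }
      assert (E2 : zsum2 K (fun a b => rpow (c a b / t) r / r) =
                   rpow t (-r) / r * zsum2 K (fun a b => rpow (c a b) r)).
      { rewrite <- zsum2_scal. unfold zsum2; apply zsum_ext; intros; cbv beta; apply zsum_ext; intros; cbv beta.
        unfold Rdiv. rewrite rpow_mult by (auto; left; apply Rinv_0_lt_compat; auto).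
        rewrite (rpow_pos (/ t)) by (apply Rinv_0_lt_compat; auto).
        rewrite (rpow_pos t) by auto. rewrite ln_Rinv by auto.
        replace (r * - ln t) with (- r * ln t) by ring. field; lra. }
      rewrite E1, E2.
      assert (0 <= rpow t q / q) by (apply Rmult_le_pos; [apply rpow_nonneg| left; apply Rinv_0_lt_compat; auto]).
      assert (rpow t q / q * zsum2 K (fun a b => rpow (w a b) q) <= rpow t q / q * W)
        by (apply Rmult_le_compat_l; auto).
      unfold Rdiv in *. lra. }
  assert (Hqr2 : q + r = q * r).
  { apply (Rmult_eq_reg_l (/ q * / r)); [|apply Rmult_integral_contrapositive; split; apply Rinv_neq_0_compat; lra].
    field_simplify; try lra. replace (/ q * / r * (q * r)) with 1 by (field; lra).
    rewrite <- Hqr. field; lra. }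
  assert (Hbound : X <= exp (ln Y / r + ln W / q) \/ Y = 0).
  { destruct HY0 as [HY|HY]; [left|right; auto].
    set (tau := (ln Y - ln W) / (q + r)).
    specialize (Hgen (exp tau) (exp_pos _)).
    rewrite !rpow_exp in Hgen.
    assert (E1 : exp (q * tau) * W = exp (ln Y / r + ln W / q)).
    { rewrite <- (exp_ln W) at 1 by auto. rewrite <- exp_plus. f_equal. unfold tau.
      rewrite Hqr2. replace (ln W / q) with (ln W * / q) by (unfold Rdiv; ring).
      replace (/ q) with (1 - / r) by lra. field; lra. }
    assert (E2 : exp (- r * tau) * Y = exp (ln Y / r + ln W / q)).
    { rewrite <- (exp_ln Y) at 1 by auto. rewrite <- exp_plus. f_equal. unfold tau.
      rewrite Hqr2. replace (ln Y / r) with (ln Y * / r) by (unfold Rdiv; ring).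
      replace (/ r) with (1 - / q) by lra. field; lra. }
    replace (exp (q * tau) * W / q + exp (- r * tau) * Y / r)
      with (exp (q * tau) * W * / q + exp (- r * tau) * Y * / r) in Hgen by (unfold Rdiv; ring).
    rewrite E1, E2 in Hgen.
    replace (exp (ln Y / r + ln W / q) * / q + exp (ln Y / r + ln W / q) * / r)
      with (exp (ln Y / r + ln W / q) * (/ q + / r)) in Hgen by ring.
    rewrite Hqr in Hgen. lra. }
  destruct Hbound as [Hb|HY].
  - destruct HX0 as [HX|HX].
    + rewrite rpow_pos by auto.
      assert (HY : 0 < Y).
      { destruct HY0 as [HY|HY]; auto.
        exfalso. rewrite <- HY in Hb. (* ln 0 : arbitrary; use Hgen *)
        clear Hb. 
        set (eps := X * q / (2 * W)).
        assert (Heps : 0 < eps) by (unfold eps; apply Rmult_lt_0_compat; [apply Rmult_lt_0_compat; auto| apply Rinv_0_lt_compat; lra]).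
        specialize (Hgen (exp (ln eps / q)) (exp_pos _)).
        rewrite rpow_exp in Hgen. rewrite <- HY in Hgen.
        replace (q * (ln eps / q)) with (ln eps) in Hgen by (field; lra).
        rewrite exp_ln in Hgen by auto. unfold eps in Hgen.
        replace (X * q / (2 * W) * W / q + rpow (exp (ln (X * q / (2 * W)) / q)) (- r) * 0 / r)
          with (X / 2) in Hgen by (field; lra). lra. }
      rewrite (rpow_pos W) by auto.
      replace Y with (exp (ln Y)) by (apply exp_ln; auto).
      rewrite <- exp_plus. apply exp_le_compat.
      assert (ln X <= ln Y / r + ln W / q).
      { apply exp_le_inv. rewrite exp_ln by auto. auto. }
      assert (Er : r * (ln Y / r + ln W / q) = ln Y + (r - 1) * ln W).
      { assert (Hrq : r / q = r - 1).
        { replace (r / q) with (r * / q) by (unfold Rdiv; ring).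
          replace (/ q) with (1 - / r) by lra. field; lra. }
        rewrite <- Hrq. field; lra. }
      rewrite Rplus_comm, <- Er. apply Rmult_le_compat_l; lra.
    + rewrite <- HX. rewrite rpow_zero by lra.
      apply Rmult_le_pos; [apply rpow_nonneg| auto].
  -
    assert (X <= 0).
    { apply Rnot_lt_le; intros HX.
      set (eps := X * q / (2 * W)).
      assert (Heps : 0 < eps) by (unfold eps; apply Rmult_lt_0_compat; [apply Rmult_lt_0_compat; auto| apply Rinv_0_lt_compat; lra]).
      specialize (Hgen (exp (ln eps / q)) (exp_pos _)).
      rewrite rpow_exp in Hgen. rewrite HY in Hgen.
      replace (q * (ln eps / q)) with (ln eps) in Hgen by (field; lra).
      rewrite exp_ln in Hgen by auto. unfold eps in Hgen.
      replace (X * q / (2 * W) * W / q + rpow (exp (ln (X * q / (2 * W)) / q)) (- r) * 0 / r)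
        with (X / 2) in Hgen by (field; lra). lra. }
    rewrite rpow_zero by lra. apply Rmult_le_pos; [apply rpow_nonneg| lra].
Qed.


Lemma japan_sq y : japan y * japan y = 1 + y ^ 2.
Proof. unfold japan. apply sqrt_sqrt. nra. Qed.

Lemma japan_ge1 y : 1 <= japan y.
Proof.
  pose proof (japan_sq y). unfold japan in *.
  pose proof (sqrt_pos (1 + y^2)). nra.
Qed.

Lemma japan_pos y : 0 < japan y.
Proof. pose proof (japan_ge1 y); lra. Qed.

Lemma japan_ge_abs y : Rabs y <= japan y.
Proof.
  pose proof (japan_sq y). pose proof (japan_ge1 y).
  pose proof (Rabs_pos y). assert (Rabs y * Rabs y = y ^ 2).
  { rewrite <- Rabs_mult. rewrite Rabs_right; [ring| nra]. }
  nra.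
Qed.

Lemma sq_le a b : 0 <= b -> a * a <= b * b -> a <= b.
Proof. intros Hb H. destruct (Rle_dec a b) as [h|h]; auto. exfalso. apply Rnot_le_lt in h. nra. Qed.

Definition LJ (y : R) : R := ln (japan y).

Lemma LJ_nonneg y : 0 <= LJ y.
Proof. unfold LJ. rewrite <- ln_1. apply ln_le_compat; [lra| apply japan_ge1]. Qed.

Lemma LJ_opp y : LJ (- y) = LJ y.
Proof. unfold LJ, japan. f_equal. f_equal. ring. Qed.

Lemma LJ_le k y z : 1 <= k -> Rabs y <= k * Rabs z -> LJ y <= ln k + LJ z.
Proof.
  intros Hk H. unfold LJ. rewrite <- ln_mult by (try apply japan_pos; lra).
  apply ln_le_compat; [apply japan_pos|].
  pose proof (japan_sq y). pose proof (japan_sq z).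
  pose proof (japan_ge1 y). pose proof (japan_ge1 z).
  pose proof (Rabs_pos y). pose proof (Rabs_pos z).
  assert (Rabs y * Rabs y = y ^ 2) by (rewrite <- Rabs_mult; rewrite Rabs_right; [ring| nra]).
  assert (Rabs z * Rabs z = z ^ 2) by (rewrite <- Rabs_mult; rewrite Rabs_right; [ring| nra]).
  assert (y ^ 2 <= k * k * z ^ 2) by nra.
  assert (japan y * japan y <= (k * japan z) * (k * japan z)) by nra.
  apply sq_le; nra.
Qed.

Lemma LJ_ge k N z : 0 < k -> 0 < N -> N <= k * Rabs z -> ln N <= ln k + LJ z.
Proof.
  intros Hk HN H. unfold LJ. rewrite <- ln_mult by (try apply japan_pos; lra).
  apply ln_le_compat; auto. pose proof (japan_ge_abs z). nra.
Qed.

Lemma LJ_up n : 1 <= Rabs n -> LJ n <= ln 2 + ln (Rabs n).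
Proof.
  intros H. unfold LJ. rewrite <- ln_mult by lra.
  apply ln_le_compat; [apply japan_pos|].
  pose proof (japan_sq n). pose proof (japan_ge1 n).
  assert (Rabs n * Rabs n = n ^ 2) by (rewrite <- Rabs_mult; rewrite Rabs_right; [ring| nra]).
  apply sq_le; nra.
Qed.

Definition Ecore (s n n1 n2 n3 : R) : R :=
  s * LJ n + ln (Rabs n) - s * (LJ n1 + LJ n2 + LJ n3)
  - / 2 * (LJ (n - n1) + LJ (n - n2) + LJ (n - n3)).

Definition lm (n y : R) := Rmin (LJ y) (LJ (n - y)).

Definition cst (s : R) := 6 * (s + 1) * ln 2.

Definition Concl (s n n1 n2 n3 : R) : Prop :=
  Ecore s n n1 n2 n3 <= cst s - (s + /4) * (lm n n1 + lm n n2) \/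
  Ecore s n n1 n2 n3 <= cst s - (s + /4) * (lm n n1 + lm n n3) \/
  Ecore s n n1 n2 n3 <= cst s - (s + /4) * (lm n n2 + lm n n3).

Lemma Concl_swap s n a b c : Concl s n a b c -> Concl s n b a c.
Proof.
  unfold Concl. replace (Ecore s n b a c) with (Ecore s n a b c) by (unfold Ecore; ring).
  intros [H|[H|H]]; lra.
Qed.

Lemma Concl_rot s n a b c : Concl s n a b c -> Concl s n b c a.
Proof.
  unfold Concl. replace (Ecore s n b c a) with (Ecore s n a b c) by (unfold Ecore; ring).
  intros [H|[H|H]]; lra.
Qed.

Lemma Concl_swap23 s n a b c : Concl s n a b c -> Concl s n a c b.
Proof.
  unfold Concl. replace (Ecore s n a c b) with (Ecore s n a b c) by (unfold Ecore; ring).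
  intros [H|[H|H]]; lra.
Qed.

Ltac rabs := unfold Rabs; repeat destruct Rcase_abs; lra.

Lemma A1 n a : Rabs a < Rabs n / 2 -> Rabs n <= 2 * Rabs (n - a).
Proof. rabs. Qed.
Lemma A2 n a b c : n = a + b + c -> Rabs n <= Rabs a + Rabs b + Rabs c.
Proof. rabs. Qed.
Lemma A3 n a b c : n = a + b + c -> 2 * Rabs n <= Rabs (n - a) + Rabs (n - b) + Rabs (n - c).
Proof. rabs. Qed.
Lemma A4 n a : Rabs (n - a) <= Rabs n + Rabs a.
Proof. rabs. Qed.
Lemma A5 a b : Rabs (a + b) <= Rabs a + Rabs b.
Proof. rabs. Qed.
Lemma A6 n a b c : n = a + b + c -> Rabs (n - b) <= Rabs n + Rabs c + Rabs (n - a).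
Proof. rabs. Qed.
Lemma A7 n a b c : n = a + b + c -> Rabs n - Rabs c <= Rabs (n - a) + Rabs (n - b).
Proof. rabs. Qed.

Lemma ln4 : ln 4 = 2 * ln 2.
Proof. replace 4 with (2 * 2) by ring. rewrite ln_mult by lra. ring. Qed.
Lemma ln8 : ln 8 = 3 * ln 2.
Proof. replace 8 with (2 * 4) by ring. rewrite ln_mult, ln4 by lra. ring. Qed.
Lemma ln2_pos : 0 < ln 2.
Proof. rewrite <- ln_1. apply ln_increasing; lra. Qed.
Lemma ln1' : ln 1 = 0.
Proof. apply ln_1. Qed.


Lemma mono_s s (Hs : s >= 1/4) a b : a <= b -> s * a <= s * b.
Proof. intros; apply Rmult_le_compat_l; lra. Qed.
Lemma mono_s4 s (Hs : s >= 1/4) a b : a <= b -> (s - /4) * a <= (s - /4) * b.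
Proof. intros; apply Rmult_le_compat_l; lra. Qed.
Lemma mono_rho s (Hs : s >= 1/4) a b : a <= b -> (s + /4) * a <= (s + /4) * b.
Proof. intros; apply Rmult_le_compat_l; lra. Qed.

Lemma basic_facts s n (Hs : s >= 1/4) (Hn : 1 <= Rabs n) :
  ln (Rabs n) <= LJ n /\ LJ n <= ln 2 + ln (Rabs n) /\ 0 <= s * ln 2.
Proof.
  split; [|split].
  - pose proof (LJ_ge 1 (Rabs n) n). rewrite ln1' in H. rewrite <- (Rplus_0_l (LJ n)). apply H; lra.
  - apply LJ_up; auto.
  - pose proof ln2_pos. apply Rmult_le_pos; lra.
Qed.

Lemma lm_facts n y : lm n y <= LJ y /\ lm n y <= LJ (n - y).
Proof. unfold lm; split; [apply Rmin_l| apply Rmin_r]. Qed.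

Lemma core0 s n ni nj nl (Hs : s >= 1/4) (Hn : 1 <= Rabs n) (Hsum : n = ni + nj + nl) : Rabs ni < Rabs n / 2 -> Rabs nj < Rabs n / 2 -> Rabs nl < Rabs n / 2 ->
  Rabs n <= 3 * Rabs ni -> Concl s n ni nj nl.
Proof.
  intros Hi Hj Hl H3.
  pose proof (basic_facts s n Hs Hn) as [B1 [B2 B3]].
  pose proof ln2_pos. pose proof ln4.
  assert (HN : 0 < Rabs n) by lra.
  assert (X1 : ln (Rabs n) <= ln 2 + LJ (n - ni)) by (apply LJ_ge; try lra; apply A1; auto).
  assert (X2 : ln (Rabs n) <= ln 2 + LJ (n - nj)) by (apply LJ_ge; try lra; apply A1; auto).
  assert (X3 : ln (Rabs n) <= ln 2 + LJ (n - nl)) by (apply LJ_ge; try lra; apply A1; auto).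
  assert (F1 : LJ n <= ln 4 + LJ ni) by (apply LJ_le; lra).
  assert (F2 : LJ nj <= ln 1 + LJ n) by (apply LJ_le; lra).
  assert (F3 : LJ nl <= ln 1 + LJ n) by (apply LJ_le; lra).
  rewrite ln1' in F2, F3.
  try rewrite ln4 in *; try rewrite ln8 in *; pose proof (mono_s s Hs _ _ F1).
  destruct (lm_facts n nj) as [Lj _]. destruct (lm_facts n nl) as [Ll _].
  pose proof (mono_rho s Hs _ _ (Rplus_le_compat _ _ _ _ Lj Ll)).
  unfold Concl, Ecore, cst. right; right. lra.
Qed.

Lemma core3 s n ni nj nl (Hs : s >= 1/4) (Hn : 1 <= Rabs n) (Hsum : n = ni + nj + nl) : Rabs ni >= Rabs n / 2 -> Rabs nj >= Rabs n / 2 -> Rabs nl >= Rabs n / 2 ->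
  2 * Rabs n <= 3 * Rabs (n - ni) -> Concl s n ni nj nl.
Proof.
  intros Hi Hj Hl H3.
  pose proof (basic_facts s n Hs Hn) as [B1 [B2 B3]].
  pose proof ln2_pos. pose proof ln4.
  assert (HN : 0 < Rabs n) by lra.
  assert (F1 : LJ n <= ln 2 + LJ ni) by (apply LJ_le; lra).
  assert (X1 : ln (Rabs n) <= ln 2 + LJ (n - ni)) by (apply LJ_ge; lra).
  pose proof (A4 n nj). pose proof (A4 n nl).
  assert (Y2 : LJ (n - nj) <= ln 4 + LJ nj) by (apply LJ_le; lra).
  assert (Y3 : LJ (n - nl) <= ln 4 + LJ nl) by (apply LJ_le; lra).
  assert (Z2 : ln (Rabs n) <= ln 2 + LJ nj) by (apply LJ_ge; lra).
  assert (Z3 : ln (Rabs n) <= ln 2 + LJ nl) by (apply LJ_ge; lra).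
  try rewrite ln4 in *; try rewrite ln8 in *; pose proof (mono_s s Hs _ _ F1).
  try rewrite ln4 in *; assert (P2 : (s - /4) * (LJ (n - nj) - 2 * ln 2) <= (s - /4) * LJ nj) by (apply (mono_s4 s Hs); lra).
  try rewrite ln4 in *; assert (P3 : (s - /4) * (LJ (n - nl) - 2 * ln 2) <= (s - /4) * LJ nl) by (apply (mono_s4 s Hs); lra).
  destruct (lm_facts n nj) as [_ Lj]. destruct (lm_facts n nl) as [_ Ll].
  pose proof (mono_rho s Hs _ _ (Rplus_le_compat _ _ _ _ Lj Ll)).
  unfold Concl, Ecore, cst. right; right. lra.
Qed.

Lemma core1 s n ni nj nl (Hs : s >= 1/4) (Hn : 1 <= Rabs n) (Hsum : n = ni + nj + nl) : Rabs ni >= Rabs n / 2 -> Rabs nj < Rabs n / 2 -> Rabs nl < Rabs n / 2 ->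
  Concl s n ni nj nl.
Proof.
  intros Hi Hj Hl.
  pose proof (basic_facts s n Hs Hn) as [B1 [B2 B3]].
  pose proof ln2_pos.
  assert (HN : 0 < Rabs n) by lra.
  assert (F1 : LJ n <= ln 2 + LJ ni) by (apply LJ_le; lra).
  assert (X2 : ln (Rabs n) <= ln 2 + LJ (n - nj)) by (apply LJ_ge; try lra; apply A1; auto).
  assert (X3 : ln (Rabs n) <= ln 2 + LJ (n - nl)) by (apply LJ_ge; try lra; apply A1; auto).
  try rewrite ln4 in *; try rewrite ln8 in *; pose proof (mono_s s Hs _ _ F1).
  assert (Hxi : n - ni = nj + nl) by lra.
  pose proof (A5 nj nl). rewrite <- Hxi in H1.
  destruct (lm_facts n ni) as [_ Li].
  destruct (Rle_dec (Rabs nj) (Rabs nl)) as [Hjl|Hjl].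
  - assert (G1 : LJ nj <= ln 1 + LJ nl) by (apply LJ_le; lra).
    assert (G2 : LJ (n - ni) <= ln 2 + LJ nl) by (apply LJ_le; lra).
    rewrite ln1' in G1.
    try rewrite ln4 in *; try rewrite ln8 in *; pose proof (mono_s4 s Hs _ _ G2).
    destruct (lm_facts n nj) as [Lj _].
    pose proof (mono_rho s Hs _ _ (Rplus_le_compat _ _ _ _ Li Lj)).
    unfold Concl, Ecore, cst. left. lra.
  - assert (G1 : LJ nl <= ln 1 + LJ nj) by (apply LJ_le; lra).
    assert (G2 : LJ (n - ni) <= ln 2 + LJ nj) by (apply LJ_le; lra).
    rewrite ln1' in G1.
    try rewrite ln4 in *; try rewrite ln8 in *; pose proof (mono_s4 s Hs _ _ G2).
    destruct (lm_facts n nl) as [Ll _].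
    pose proof (mono_rho s Hs _ _ (Rplus_le_compat _ _ _ _ Li Ll)).
    unfold Concl, Ecore, cst. right; left. lra.
Qed.

Lemma core2 s n ni nj nl (Hs : s >= 1/4) (Hn : 1 <= Rabs n) (Hsum : n = ni + nj + nl) : Rabs ni >= Rabs n / 2 -> Rabs nj >= Rabs n / 2 -> Rabs nl < Rabs n / 2 ->
  Rabs n <= 4 * Rabs (n - ni) -> Concl s n ni nj nl.
Proof.
  intros Hi Hj Hl H4.
  pose proof (basic_facts s n Hs Hn) as [B1 [B2 B3]].
  pose proof ln2_pos. pose proof ln4. pose proof ln8.
  assert (HN : 0 < Rabs n) by lra.
  assert (F1 : LJ n <= ln 2 + LJ ni) by (apply LJ_le; lra).
  assert (X3 : ln (Rabs n) <= ln 2 + LJ (n - nl)) by (apply LJ_ge; try lra; apply A1; auto).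
  assert (X1 : ln (Rabs n) <= ln 4 + LJ (n - ni)) by (apply LJ_ge; lra).
  assert (Hxi : n - ni = nj + nl) by lra.
  pose proof (A5 nj nl). rewrite <- Hxi in H2.
  assert (G : LJ (n - ni) <= ln 2 + LJ nj) by (apply LJ_le; lra).
  try rewrite ln4 in *; try rewrite ln8 in *; pose proof (mono_s s Hs _ _ F1).
  assert (P : s * (LJ (n - ni) - ln 2) <= s * LJ nj) by (apply (mono_s s Hs); lra).
  pose proof (A6 n ni nj nl Hsum).
  destruct (Rle_dec (Rabs nl) (Rabs (n - ni))) as [Hc|Hc].
  - assert (G1 : LJ nl <= ln 1 + LJ (n - ni)) by (apply LJ_le; lra).
    assert (G2 : LJ (n - nj) <= ln 8 + LJ (n - ni)) by (apply LJ_le; lra).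
    rewrite ln1' in G1.
    try rewrite ln4 in *; try rewrite ln8 in *; pose proof (mono_s4 s Hs _ _ G2).
    destruct (lm_facts n nl) as [Ll _]. destruct (lm_facts n nj) as [_ Lj].
    pose proof (mono_rho s Hs _ _ (Rplus_le_compat _ _ _ _ Lj Ll)).
    unfold Concl, Ecore, cst. right; right. lra.
  - assert (G1 : LJ (n - ni) <= ln 1 + LJ nl) by (apply LJ_le; lra).
    assert (G2 : LJ (n - nj) <= ln 8 + LJ nl) by (apply LJ_le; lra).
    rewrite ln1' in G1.
    try rewrite ln4 in *; try rewrite ln8 in *; pose proof (mono_s4 s Hs _ _ G2).
    destruct (lm_facts n ni) as [_ Li]. destruct (lm_facts n nj) as [_ Lj].
    pose proof (mono_rho s Hs _ _ (Rplus_le_compat _ _ _ _ Li Lj)).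
    unfold Concl, Ecore, cst. left. lra.
Qed.



Lemma key_real s n n1 n2 n3 : s >= 1/4 -> 1 <= Rabs n -> n = n1 + n2 + n3 ->
  Concl s n n1 n2 n3.
Proof.
  intros Hs Hn Hsum.
  pose proof (A2 n n1 n2 n3 Hsum). pose proof (A3 n n1 n2 n3 Hsum).
  pose proof (A7 n n1 n2 n3 Hsum). pose proof (A7 n n1 n3 n2 ltac:(lra)).
  pose proof (A7 n n2 n3 n1 ltac:(lra)).
  destruct (Rlt_dec (Rabs n1) (Rabs n / 2)) as [B1|A1'];
  destruct (Rlt_dec (Rabs n2) (Rabs n / 2)) as [B2|A2'];
  destruct (Rlt_dec (Rabs n3) (Rabs n / 2)) as [B3|A3'];
  try apply Rnot_lt_le in A1'; try apply Rnot_lt_le in A2'; try apply Rnot_lt_le in A3'.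
  -
    destruct (Rle_dec (Rabs n) (3 * Rabs n1)).
    { apply core0; auto; lra. }
    destruct (Rle_dec (Rabs n) (3 * Rabs n2)).
    { apply Concl_swap; apply core0; auto; lra. }
    apply Concl_rot; apply core0; auto; lra.
  - apply Concl_rot; apply core1; auto; lra.
  - apply Concl_swap; apply core1; auto; lra.
  -
    destruct (Rle_dec (Rabs n) (4 * Rabs (n - n2))).
    { apply Concl_rot, Concl_rot; apply core2; auto; lra. }
    apply Concl_rot, Concl_swap23; apply core2; auto; lra.
  - apply core1; auto; lra.
  -
    destruct (Rle_dec (Rabs n) (4 * Rabs (n - n1))).
    { apply Concl_swap23; apply core2; auto; lra. }
    apply Concl_rot; apply core2; auto; lra.
  -
    destruct (Rle_dec (Rabs n) (4 * Rabs (n - n1))).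
    { apply core2; auto; lra. }
    apply Concl_swap; apply core2; auto; lra.
  -
    destruct (Rle_dec (2 * Rabs n) (3 * Rabs (n - n1))).
    { apply core3; auto; lra. }
    destruct (Rle_dec (2 * Rabs n) (3 * Rabs (n - n2))).
    { apply Concl_swap; apply core3; auto; lra. }
    apply Concl_rot; apply core3; auto; lra.
Qed.


Lemma m1_exp s n1 n2 n3 : (n1 + n2 + n3 <> 0)%Z ->
  m1 s n1 n2 n3 = exp (Ecore s (IZR (n1 + n2 + n3)) (IZR n1) (IZR n2) (IZR n3)).
Proof.
  intros Hn. unfold m1, Ecore, Rpower, LJ. cbv zeta.
  rewrite !minus_IZR.
  set (nn := IZR (n1 + n2 + n3)).
  assert (Hnn : 0 < Rabs nn).
  { apply Rabs_pos_lt. unfold nn. apply not_0_IZR. auto. }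
  rewrite <- (exp_ln (Rabs nn)) at 1 by auto.
  set (Ln := ln (japan nn)). set (L1 := ln (japan (IZR n1))).
  set (L2 := ln (japan (IZR n2))). set (L3 := ln (japan (IZR n3))).
  set (X1 := ln (japan (nn - IZR n1))). set (X2 := ln (japan (nn - IZR n2))).
  set (X3 := ln (japan (nn - IZR n3))).
  replace (s * Ln + ln (Rabs nn) - s * (L1 + L2 + L3) - / 2 * (X1 + X2 + X3))
    with ((s * Ln + ln (Rabs nn)) + - (s * L1 + 1/2 * X1 + s * L2 + 1/2 * X2 + s * L3 + 1/2 * X3)) by field.
  rewrite exp_plus, exp_Ropp, exp_plus. rewrite !exp_plus. unfold Rdiv. reflexivity.
Qed.

Lemma m1_zero s n1 n2 n3 : (n1 + n2 + n3 = 0)%Z -> m1 s n1 n2 n3 = 0.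
Proof. intros H. unfold m1. cbv zeta. rewrite H. rewrite Rabs_R0. unfold Rdiv. ring. Qed.

Lemma m1_nonneg s n1 n2 n3 : 0 <= m1 s n1 n2 n3.
Proof.
  destruct (Z.eq_dec (n1 + n2 + n3) 0).
  - rewrite m1_zero; auto; lra.
  - rewrite m1_exp; auto. left; apply exp_pos.
Qed.

Definition excl (n n1 n2 : Z) : bool := (Z.eqb n1 n || Z.eqb n2 n || Z.eqb (n - n1 - n2) n)%bool.

Definition wt (s : R) (n n1 n2 : Z) : R :=
  if excl n n1 n2 then 0 else m1 s n1 n2 (n - n1 - n2).

Lemma wt_nonneg s n n1 n2 : 0 <= wt s n n1 n2.
Proof. unfold wt; destruct excl; [lra| apply m1_nonneg]. Qed.

Lemma S1_term_wt s a1 a2 a3 n n1 n2 :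
  S1_term s a1 a2 a3 n n1 n2 = wt s n n1 n2 * (a1 n1 * a2 n2 * a3 (n - n1 - n2)%Z).
Proof. unfold S1_term, wt, excl. destruct (_ || _)%bool; [ring| reflexivity]. Qed.

Definition phi (al : R) (y : Z) : R := exp (- al * LJ (IZR y)).
Definition psi (al : R) (n y : Z) : R := phi al y + phi al (y - n).

Lemma phi_pos al y : 0 < phi al y.
Proof. apply exp_pos. Qed.
Lemma psi_nonneg al n y : 0 <= psi al n y.
Proof. unfold psi; pose proof (phi_pos al y); pose proof (phi_pos al (y - n)); lra. Qed.

Lemma exp_lm al n y : 0 <= al ->
  exp (- al * lm (IZR n) (IZR y)) <= psi al n y.
Proof.
  intros Hal. unfold psi, phi, lm. rewrite minus_IZR.
  replace (IZR n - IZR y) with (- (IZR y - IZR n)) by ring. rewrite LJ_opp.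
  pose proof (exp_pos (- al * LJ (IZR y))). pose proof (exp_pos (- al * LJ (IZR y - IZR n))).
  destruct (Rle_dec (LJ (IZR y)) (LJ (IZR y - IZR n))).
  - rewrite Rmin_left by auto. lra.
  - rewrite Rmin_right by lra. lra.
Qed.

Lemma wt_pow_bound s q n n1 n2 : s >= 1/4 -> 0 < q ->
  rpow (wt s n n1 n2) q <=
  exp (q * cst s) * (psi (q * (s + /4)) n n1 * psi (q * (s + /4)) n n2
                   + psi (q * (s + /4)) n n1 * psi (q * (s + /4)) n (n1 + n2)
                   + psi (q * (s + /4)) n n2 * psi (q * (s + /4)) n (n1 + n2)).
Proof.
  intros Hs Hq.
  set (al := q * (s + /4)).
  assert (Hal : 0 <= al) by (unfold al; apply Rmult_le_pos; lra).
  pose proof (psi_nonneg al n n1). pose proof (psi_nonneg al n n2). pose proof (psi_nonneg al n (n1+n2)).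
  assert (Hrhs : 0 <= exp (q * cst s) * (psi al n n1 * psi al n n2 + psi al n n1 * psi al n (n1 + n2)
                                        + psi al n n2 * psi al n (n1 + n2))).
  { apply Rmult_le_pos; [left; apply exp_pos|]. 
    pose proof (Rmult_le_pos _ _ H H0). pose proof (Rmult_le_pos _ _ H H1).
    pose proof (Rmult_le_pos _ _ H0 H1). lra. }
  unfold wt. destruct (excl n n1 n2).
  { rewrite rpow_zero by lra. auto. }
  destruct (Z.eq_dec n 0) as [Hn0|Hn0].
  { rewrite m1_zero by lia. rewrite rpow_zero by lra. auto. }
  rewrite m1_exp by lia. rewrite rpow_exp.
  replace (n1 + n2 + (n - n1 - n2))%Z with n by ring.
  assert (Hn : 1 <= Rabs (IZR n)).
  { rewrite <- abs_IZR. apply IZR_le. lia. }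
  pose proof (key_real s (IZR n) (IZR n1) (IZR n2) (IZR (n - n1 - n2)) Hs Hn
     ltac:(rewrite !minus_IZR; ring)) as HK.
  set (E := Ecore s (IZR n) (IZR n1) (IZR n2) (IZR (n - n1 - n2))) in *.
  assert (P3 : exp (- al * lm (IZR n) (IZR (n - n1 - n2))) <= psi al n (n1 + n2)).
  { unfold psi, phi, lm.
    replace (IZR n - IZR (n - n1 - n2)) with (IZR (n1 + n2)) by (rewrite !minus_IZR, plus_IZR; ring).
    replace (IZR (n - n1 - n2)) with (- IZR (n1 + n2 - n)) by (rewrite !minus_IZR, plus_IZR; ring).
    rewrite LJ_opp.
    pose proof (exp_pos (- al * LJ (IZR (n1 + n2)))). pose proof (exp_pos (- al * LJ (IZR (n1 + n2 - n)))).
    destruct (Rle_dec (LJ (IZR (n1 + n2 - n))) (LJ (IZR (n1 + n2)))).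
    - rewrite Rmin_left by auto. lra.
    - rewrite Rmin_right by lra. lra. }
  pose proof (exp_lm al n n1 Hal) as P1. pose proof (exp_lm al n n2 Hal) as P2.
  set (l1 := lm (IZR n) (IZR n1)) in *. set (l2 := lm (IZR n) (IZR n2)) in *.
  set (l3 := lm (IZR n) (IZR (n - n1 - n2))) in *.
  assert (Hprod : forall x y X Y, exp (- al * x) <= X -> exp (- al * y) <= Y ->
            E <= cst s - (s + /4) * (x + y) ->
            exp (q * E) <= exp (q * cst s) * (X * Y)).
  { intros x y X Y Hx Hy HE.
    eapply Rle_trans with (exp (q * cst s) * (exp (- al * x) * exp (- al * y))).
    - rewrite <- !exp_plus. apply exp_le_compat. unfold al.
      assert (q * E <= q * (cst s - (s + /4) * (x + y))) by (apply Rmult_le_compat_l; lra).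
      lra.
    - apply Rmult_le_compat_l; [left; apply exp_pos|].
      apply Rmult_le_compat; try (left; apply exp_pos); auto. }
  assert (0 <= psi al n n1 * psi al n n2) by (apply Rmult_le_pos; auto).
  assert (0 <= psi al n n1 * psi al n (n1 + n2)) by (apply Rmult_le_pos; auto).
  assert (0 <= psi al n n2 * psi al n (n1 + n2)) by (apply Rmult_le_pos; auto).
  pose proof (exp_pos (q * cst s)).
  destruct HK as [HK|[HK|HK]].
  - eapply Rle_trans; [apply (Hprod _ _ _ _ P1 P2 HK)|].
    apply Rmult_le_compat_l; lra.
  - eapply Rle_trans; [apply (Hprod _ _ _ _ P1 P3 HK)|].
    apply Rmult_le_compat_l; lra.
  - eapply Rle_trans; [apply (Hprod _ _ _ _ P2 P3 HK)|].
    apply Rmult_le_compat_l; lra.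
Qed.

Lemma wt_bound s n n1 n2 : s >= 1/4 -> wt s n n1 n2 <= exp (cst s).
Proof.
  intros Hs. unfold wt. destruct (excl n n1 n2); [left; apply exp_pos|].
  destruct (Z.eq_dec n 0) as [Hn0|Hn0].
  { rewrite m1_zero by lia. left; apply exp_pos. }
  rewrite m1_exp by lia. apply exp_le_compat.
  replace (n1 + n2 + (n - n1 - n2))%Z with n by ring.
  assert (Hn : 1 <= Rabs (IZR n)).
  { rewrite <- abs_IZR. apply IZR_le. lia. }
  pose proof (key_real s (IZR n) (IZR n1) (IZR n2) (IZR (n - n1 - n2)) Hs Hn
     ltac:(rewrite !minus_IZR; ring)) as HK.
  unfold Concl, lm in HK.
  pose proof (LJ_nonneg (IZR n1)). pose proof (LJ_nonneg (IZR n2)).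
  pose proof (LJ_nonneg (IZR (n - n1 - n2))).
  pose proof (LJ_nonneg (IZR n - IZR n1)). pose proof (LJ_nonneg (IZR n - IZR n2)).
  pose proof (LJ_nonneg (IZR n - IZR (n - n1 - n2))).
  assert (forall a b c d, 0 <= a -> 0 <= b -> 0 <= c -> 0 <= d -> 0 <= (s + /4) * (Rmin a b + Rmin c d)).
  { intros. apply Rmult_le_pos; [lra|]. unfold Rmin. destruct Rle_dec; destruct Rle_dec; lra. }
  destruct HK as [HK|[HK|HK]].
  - pose proof (H5 (LJ (IZR n1)) (LJ (IZR n - IZR n1)) (LJ (IZR n2)) (LJ (IZR n - IZR n2))). lra.
  - pose proof (H5 (LJ (IZR n1)) (LJ (IZR n - IZR n1)) (LJ (IZR (n - n1 - n2))) (LJ (IZR n - IZR (n - n1 - n2)))). lra.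
  - pose proof (H5 (LJ (IZR n2)) (LJ (IZR n - IZR n2)) (LJ (IZR (n - n1 - n2))) (LJ (IZR n - IZR (n - n1 - n2)))). lra.
Qed.


Definition Gf (al m : R) : R := exp ((1 - al) * ln (m + 1)).

Lemma ln_step m : 0 <= m -> / (m + 2) <= ln (m + 2) - ln (m + 1).
Proof.
  intros Hm.
  pose proof (exp_ineq1_le (- / (m + 2))).
  assert (Hp : 0 < / (m + 2)) by (apply Rinv_0_lt_compat; lra).
  assert (E : (m + 1) / (m + 2) = 1 + - / (m + 2)) by (field; lra).
  assert (ln ((m + 1) / (m + 2)) <= - / (m + 2)).
  { apply exp_le_inv. rewrite exp_ln by (apply Rdiv_lt_0_compat; lra). lra. }
  unfold Rdiv in H0. rewrite ln_mult, ln_Rinv in H0 by lra. lra.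
Qed.

Lemma G_step al m : 1 < al -> 0 <= m ->
  exp (- al * LJ m) <= exp (al * ln 3) / (al - 1) * (Gf al m - Gf al (m + 1)).
Proof.
  intros Hal Hm.
  pose proof (ln_step m Hm) as Hu.
  set (u := ln (m + 2) - ln (m + 1)) in *.
  assert (HG : Gf al m = Gf al (m + 1) * exp ((al - 1) * u)).
  { unfold Gf. rewrite <- exp_plus. f_equal. unfold u.
    replace (m + 1 + 1) with (m + 2) by ring. ring. }
  pose proof (exp_ineq1_le ((al - 1) * u)).
  assert (HG1 : 0 < Gf al (m + 1)) by apply exp_pos.
  assert (Hdiff : (al - 1) * (Gf al (m + 1) / (m + 2)) <= Gf al m - Gf al (m + 1)).
  { rewrite HG.
    assert ((al - 1) / (m + 2) <= (al - 1) * u).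
    { unfold Rdiv. apply Rmult_le_compat_l; lra. }
    assert (Gf al (m + 1) * (1 + (al - 1) * u) <= Gf al (m + 1) * exp ((al - 1) * u))
      by (apply Rmult_le_compat_l; lra).
    assert (Gf al (m + 1) * ((al - 1) / (m + 2)) <= Gf al (m + 1) * ((al - 1) * u))
      by (apply Rmult_le_compat_l; lra).
    unfold Rdiv in *. nra. }
  assert (Ediv : Gf al (m + 1) / (m + 2) = exp (- al * ln (m + 2))).
  { unfold Gf. replace (m + 1 + 1) with (m + 2) by ring.
    rewrite <- (exp_ln (m + 2)) at 2 by lra. unfold Rdiv. rewrite <- exp_Ropp, <- exp_plus.
    f_equal. ring. }
  rewrite Ediv in Hdiff.
  assert (Hl : ln (m + 2) <= ln 3 + LJ m).
  { unfold LJ. rewrite <- ln_mult by (try apply japan_pos; lra).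
    apply ln_le_compat; [lra|]. pose proof (japan_ge1 m). pose proof (japan_ge_abs m).
    rewrite Rabs_right in H1 by lra. lra. }
  assert (exp (- al * LJ m) <= exp (al * ln 3) * exp (- al * ln (m + 2))).
  { rewrite <- exp_plus. apply exp_le_compat.
    assert (al * ln (m + 2) <= al * (ln 3 + LJ m)) by (apply Rmult_le_compat_l; lra). lra. }
  assert (0 < exp (al * ln 3)) by apply exp_pos.
  assert (exp (al * ln 3) * exp (- al * ln (m + 2)) <= exp (al * ln 3) * ((Gf al m - Gf al (m + 1)) / (al - 1))).
  { apply Rmult_le_compat_l; [lra|]. apply (Rmult_le_reg_l (al - 1)); [lra|].
    replace ((al - 1) * ((Gf al m - Gf al (m + 1)) / (al - 1))) with (Gf al m - Gf al (m + 1)) by (field; lra).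
    lra. }
  unfold Rdiv in *. lra.
Qed.

Lemma Gf_bounds al m : 1 < al -> 0 <= m -> 0 < Gf al m <= 1.
Proof.
  intros Hal Hm. unfold Gf. split; [apply exp_pos|].
  apply Rle_trans with (exp 0); [apply exp_le_compat| rewrite exp_0; lra].
  assert (0 <= ln (m + 1)) by (rewrite <- ln_1; apply ln_le_compat; lra).
  assert ((al - 1) * ln (m + 1) >= 0) by (apply Rle_ge, Rmult_le_pos; lra). lra.
Qed.

Lemma Gf_0 al : Gf al 0 = 1.
Proof. unfold Gf. rewrite Rplus_0_l, ln_1, Rmult_0_r. apply exp_0. Qed.

Definition Dd (al : R) := exp (al * ln 3) / (al - 1).

Definition Hf (al : R) (y : Z) : R :=
  if Z.leb 0 y then 2 * Dd al - Dd al * Gf al (IZR y) else Dd al * Gf al (IZR (- y)).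

Lemma Dd_pos al : 1 < al -> 0 < Dd al.
Proof. intros; unfold Dd. apply Rdiv_lt_0_compat; [apply exp_pos| lra]. Qed.

Lemma phi_even al y : phi al (- y) = phi al y.
Proof. unfold phi. rewrite opp_IZR, LJ_opp. reflexivity. Qed.

Lemma phi_mono al m : 0 <= al -> (0 <= m)%Z -> phi al (m + 1) <= phi al m.
Proof.
  intros Hal Hm. unfold phi. apply exp_le_compat.
  assert (LJ (IZR m) <= ln 1 + LJ (IZR (m + 1))).
  { apply LJ_le; [lra|]. rewrite plus_IZR. apply IZR_le in Hm.
    rewrite !Rabs_right by lra. lra. }
  rewrite ln_1 in H. assert (al * LJ (IZR m) <= al * LJ (IZR (m + 1))) by (apply Rmult_le_compat_l; lra).
  lra.
Qed.

Lemma Hf_step al y : 1 < al -> phi al y <= Hf al (y + 1) - Hf al y.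
Proof.
  intros Hal. pose proof (Dd_pos al Hal).
  destruct (Z_le_gt_dec 0 y) as [Hy|Hy].
  - unfold Hf. replace (Z.leb 0 (y + 1)) with true by (symmetry; apply Z.leb_le; lia).
    replace (Z.leb 0 y) with true by (symmetry; apply Z.leb_le; lia).
    rewrite plus_IZR.
    pose proof (G_step al (IZR y) Hal (IZR_le _ _ Hy)). unfold phi, Dd in *. lra.
  - assert (E1 : Hf al (y + 1) = Dd al * Gf al (IZR (- y - 1))).
    { unfold Hf. destruct (Z.leb 0 (y + 1)) eqn:E.
      + apply Z.leb_le in E. replace (y + 1)%Z with 0%Z by lia.
        replace (- y - 1)%Z with 0%Z by lia. rewrite Gf_0. ring.
      + f_equal. f_equal. f_equal. lia. }
    assert (E2 : Hf al y = Dd al * Gf al (IZR (- y - 1) + 1)).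
    { unfold Hf. replace (Z.leb 0 y) with false by (symmetry; apply Z.leb_gt; lia).
      f_equal. f_equal. rewrite <- (plus_IZR _ 1). f_equal. lia. }
    rewrite E1, E2.
    pose proof (G_step al (IZR (- y - 1)) Hal (IZR_le 0 (- y - 1) ltac:(lia))).
    pose proof (phi_mono al (- y - 1) ltac:(lra) ltac:(lia)).
    replace (- y - 1 + 1)%Z with (- y)%Z in H1 by lia. rewrite phi_even in H1.
    unfold phi, Dd in *. lra.
Qed.

Lemma Hf_bounds al y : 1 < al -> 0 <= Hf al y <= 2 * Dd al.
Proof.
  intros Hal. pose proof (Dd_pos al Hal). unfold Hf. destruct (Z.leb 0 y) eqn:E.
  - apply Z.leb_le in E. pose proof (Gf_bounds al (IZR y) Hal (IZR_le 0 _ E)).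
    assert (0 <= Dd al * Gf al (IZR y) <= Dd al) by (split; nra). lra.
  - apply Z.leb_gt in E. pose proof (Gf_bounds al (IZR (- y)) Hal (IZR_le 0 (- y) ltac:(lia))).
    split; nra.
Qed.

Definition Bnd (f : Z -> R) (F : R) : Prop :=
  (forall y, 0 <= f y) /\ forall N c, zsum N (fun k => f (k + c)%Z) <= F.

Lemma phi_Bnd al : 1 < al -> Bnd (phi al) (2 * Dd al).
Proof.
  intros Hal. split; [intros; left; apply phi_pos|].
  intros N c.
  assert (E : zsum N (fun k => phi al (k + c)%Z) = isum (c - Z.of_nat N) (2 * N) (phi al)).
  { unfold zsum, isum; apply sum_eq; intros; f_equal; lia. }
  rewrite E. eapply Rle_trans; [apply isum_tele; intros; apply Hf_step; auto|].
  pose proof (Hf_bounds al (c - Z.of_nat N + Z.of_nat (2 * N) + 1) Hal).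
  pose proof (Hf_bounds al (c - Z.of_nat N) Hal). lra.
Qed.

Lemma psi_Bnd al n : 1 < al -> Bnd (psi al n) (4 * Dd al).
Proof.
  intros Hal. destruct (phi_Bnd al Hal) as [H0 H1]. split; [intros; apply psi_nonneg|].
  intros N c. unfold psi.
  rewrite (zsum_ext N _ (fun k => phi al (k + c)%Z + phi al (k + (c - n))%Z))
    by (intros; f_equal; f_equal; lia).
  rewrite zsum_plus. pose proof (H1 N c). pose proof (H1 N (c - n)%Z). lra.
Qed.

Lemma Bnd_nonneg f F : Bnd f F -> 0 <= F.
Proof.
  intros [H0 H1]. eapply Rle_trans; [|apply (H1 0%nat 0%Z)]. apply zsum_nonneg. auto.
Qed.

Lemma L12 K f g F G : Bnd f F -> Bnd g G -> zsum2 K (fun a b => f a * g b) <= F * G.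
Proof.
  intros Hf Hg. pose proof (Bnd_nonneg _ _ Hf). pose proof (Bnd_nonneg _ _ Hg).
  destruct Hf as [Hf0 Hf1]. destruct Hg as [Hg0 Hg1].
  unfold zsum2.
  eapply Rle_trans.
  - apply zsum_le. intros a. rewrite zsum_scal.
    apply Rmult_le_compat_l; [auto|]. 
    rewrite (zsum_ext K _ (fun k => g (k + 0)%Z)) by (intros; f_equal; lia). apply Hg1.
  - rewrite (zsum_ext K _ (fun a => G * f (a + 0)%Z)) by (intros; rewrite Z.add_0_r; ring).
    rewrite zsum_scal. pose proof (Hf1 K 0%Z). nra.
Qed.

Lemma L13 K f g F G : Bnd f F -> Bnd g G -> zsum2 K (fun a b => f a * g (a + b)%Z) <= F * G.
Proof.
  intros Hf Hg. pose proof (Bnd_nonneg _ _ Hf). pose proof (Bnd_nonneg _ _ Hg).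
  destruct Hf as [Hf0 Hf1]. destruct Hg as [Hg0 Hg1].
  unfold zsum2.
  eapply Rle_trans.
  - apply zsum_le. intros a. rewrite zsum_scal.
    apply Rmult_le_compat_l; [auto|].
    rewrite (zsum_ext K _ (fun k => g (k + a)%Z)) by (intros; f_equal; lia). apply Hg1.
  - rewrite (zsum_ext K _ (fun a => G * f (a + 0)%Z)) by (intros; rewrite Z.add_0_r; ring).
    rewrite zsum_scal. pose proof (Hf1 K 0%Z). nra.
Qed.

Lemma L23 K f g F G : Bnd f F -> Bnd g G -> zsum2 K (fun a b => f b * g (a + b)%Z) <= F * G.
Proof.
  intros Hf Hg. unfold zsum2. rewrite zsum2_swap.
  pose proof (L13 K f g F G Hf Hg). unfold zsum2 in H.
  rewrite (zsum_ext K _ (fun a => zsum K (fun b => f a * g (a + b)%Z))); auto.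
  intros; apply zsum_ext; intros; f_equal; f_equal; lia.
Qed.

Definition Wq (s q : R) : R :=
  exp (q * cst s) * (3 * (4 * Dd (q * (s + /4))) * (4 * Dd (q * (s + /4)))) + 1.

Lemma Wq_bound s q n K : s >= 1/4 -> 0 < q -> 1 < q * (s + /4) ->
  zsum2 K (fun n1 n2 => rpow (wt s n n1 n2) q) <= Wq s q.
Proof.
  intros Hs Hq Hal.
  set (al := q * (s + /4)) in *.
  pose proof (psi_Bnd al n Hal) as HB.
  eapply Rle_trans; [apply zsum2_le; intros; apply wt_pow_bound; auto|].
  fold al.
  rewrite zsum2_scal, !zsum2_plus.
  pose proof (L12 K _ _ _ _ HB HB). pose proof (L13 K _ _ _ _ HB HB). pose proof (L23 K _ _ _ _ HB HB).
  pose proof (exp_pos (q * cst s)).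
  unfold Wq. fold al.
  assert (zsum2 K (fun a b => psi al n a * psi al n b) +
          zsum2 K (fun a b => psi al n a * psi al n (a + b)) +
          zsum2 K (fun a b => psi al n b * psi al n (a + b)) <= 3 * (4 * Dd al) * (4 * Dd al)) by lra.
  assert (exp (q * cst s) * (zsum2 K (fun a b => psi al n a * psi al n b) +
          zsum2 K (fun a b => psi al n a * psi al n (a + b)) +
          zsum2 K (fun a b => psi al n b * psi al n (a + b))) <= exp (q * cst s) * (3 * (4 * Dd al) * (4 * Dd al)))
    by (apply Rmult_le_compat_l; lra).
  lra.
Qed.


Lemma mono_cv (u : nat -> R) B : (forall K, 0 <= u K) ->
  (forall K, u K <= u (S K)) -> (forall K, u K <= B) -> { l | Un_cv u l }.
Proof.
  intros H0 H1 H2. apply growing_cv; [exact H1|].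
  exists B. intros x [i ->]. apply H2.
Qed.

Lemma lim_le (u : nat -> R) l B : Un_cv u l -> (forall K, u K <= B) -> l <= B.
Proof.
  intros Hc Hb. apply Rnot_lt_le. intros Hlt.
  destruct (Hc (l - B)) as [K HK]; [lra|].
  specialize (HK K (le_n K)). unfold Rdist in HK. specialize (Hb K).
  unfold Rabs in HK; destruct Rcase_abs; lra.
Qed.

Lemma lim_abs_le (u : nat -> R) l B : Un_cv u l -> (forall K, Rabs (u K) <= B) -> Rabs l <= B.
Proof. intros Hc Hb. apply (lim_le (fun K => Rabs (u K))); auto. apply cv_cvabs; auto. Qed.

Lemma conv_abs (T : Z -> Z -> R) B :
  (forall K, zsum2 K (fun a b => Rabs (T a b)) <= B) -> { l | Un_cv (fun K => zsum2 K T) l }.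
Proof.
  intros HB.
  set (Tp := fun a b => (Rabs (T a b) + T a b) / 2).
  set (Tm := fun a b => (Rabs (T a b) - T a b) / 2).
  assert (Hp0 : forall a b, 0 <= Tp a b) by (intros; unfold Tp; unfold Rabs; destruct Rcase_abs; lra).
  assert (Hm0 : forall a b, 0 <= Tm a b) by (intros; unfold Tm; unfold Rabs; destruct Rcase_abs; lra).
  destruct (mono_cv (fun K => zsum2 K Tp) B) as [lp Hlp].
  - intros; apply zsum2_nonneg; auto.
  - intros; apply zsum2_mono; auto.
  - intros K. eapply Rle_trans; [|apply (HB K)]. apply zsum2_le. intros; unfold Tp.
    unfold Rabs; destruct Rcase_abs; lra.
  - destruct (mono_cv (fun K => zsum2 K Tm) B) as [lm' Hlm].
    + intros; apply zsum2_nonneg; auto.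
    + intros; apply zsum2_mono; auto.
    + intros K. eapply Rle_trans; [|apply (HB K)]. apply zsum2_le. intros; unfold Tm.
      unfold Rabs; destruct Rcase_abs; lra.
    + exists (lp - lm'). 
      assert (E : forall K, zsum2 K T = zsum2 K Tp - zsum2 K Tm).
      { intros K. rewrite <- zsum2_minus. unfold zsum2; apply zsum_ext; intros; apply zsum_ext; intros.
        unfold Tp, Tm. field. }
      intros eps Heps. destruct (CV_minus _ _ _ _ Hlp Hlm eps Heps) as [N HN].
      exists N. intros K HK. rewrite E. apply HN; auto.
Qed.

Lemma sum_cv (u : nat -> nat -> R) (l : nat -> R) m :
  (forall i, Un_cv (fun K => u K i) (l i)) ->
  Un_cv (fun K => sum_f_R0 (fun i => u K i) m) (sum_f_R0 l m).
Proof.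
  intros H. induction m as [|m IH]; simpl.
  - apply H.
  - apply CV_plus; auto.
Qed.

Lemma zsum_cv (u : nat -> Z -> R) (l : Z -> R) N :
  (forall n, Un_cv (fun K => u K n) (l n)) ->
  Un_cv (fun K => zsum N (fun n => u K n)) (zsum N l).
Proof. intros H. unfold zsum. apply (sum_cv (fun K i => u K (Z.of_nat i - Z.of_nat N)%Z)). auto. Qed.

Lemma zsum_swap N K (g : Z -> Z -> R) :
  zsum N (fun a => zsum K (fun b => g a b)) = zsum K (fun b => zsum N (fun a => g a b)).
Proof. unfold zsum; apply sum_swap. Qed.

Lemma Bnd_of f A : (forall y, 0 <= f y) -> (forall M, zsum M f <= A) -> Bnd f A.
Proof. intros H0 H1. split; auto. intros N c. apply zsum_shift; auto. Qed.

Lemma rpow_inv_le x r Y : 0 <= x -> 0 < r -> rpow x r <= Y -> x <= rpow Y (/ r).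
Proof.
  intros Hx Hr H. destruct Hx as [Hx|Hx]; [|subst; apply rpow_nonneg].
  rewrite rpow_pos in H by auto. pose proof (exp_pos (r * ln x)).
  rewrite rpow_pos by lra. rewrite <- (exp_ln x) at 1 by auto. apply exp_le_compat.
  assert (r * ln x <= ln Y) by (apply exp_le_inv; rewrite exp_ln; lra).
  apply (Rmult_le_reg_l r); auto. replace (r * (/ r * ln Y)) with (ln Y) by (field; lra). lra.
Qed.

Lemma rpow_inv_r Y r : 0 <= Y -> 0 < r -> rpow (rpow Y (/ r)) r = Y.
Proof.
  intros HY Hr. rewrite rpow_rpow by auto. replace (/ r * r) with 1 by (field; lra).
  apply rpow_1; auto.
Qed.

Lemma rpow_r_inv Y r : 0 <= Y -> 0 < r -> rpow (rpow Y r) (/ r) = Y.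
Proof.
  intros HY Hr. rewrite rpow_rpow by auto. replace (r * / r) with 1 by (field; lra).
  apply rpow_1; auto.
Qed.

Lemma lp_fin_extract r a M : 1 <= r -> lp_le (Fin r) a M ->
  0 <= M /\ forall N, zsum N (fun n => rpow (Rabs (a n)) r) <= rpow M r.
Proof.
  intros Hr H. simpl in H.
  assert (HM : 0 <= M) by (eapply Rle_trans; [apply rpow_nonneg| apply (H 0%nat)]).
  split; auto. intros N. specialize (H N).
  set (Z := zsum N (fun n => rpow (Rabs (a n)) r)) in *.
  assert (HZ : 0 <= Z) by (apply zsum_nonneg; intros; apply rpow_nonneg).
  rewrite <- (rpow_inv_r Z r) by (auto; lra).
  apply rpow_le; [split; [apply rpow_nonneg| auto]| lra].
Qed.

Definition cc (a1 a2 a3 : Z -> R) (n n1 n2 : Z) : R :=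
  Rabs (a1 n1) * Rabs (a2 n2) * Rabs (a3 (n - n1 - n2)%Z).

Lemma cc_nonneg a1 a2 a3 n n1 n2 : 0 <= cc a1 a2 a3 n n1 n2.
Proof. unfold cc. pose proof (Rabs_pos (a1 n1)). pose proof (Rabs_pos (a2 n2)).
  pose proof (Rabs_pos (a3 (n - n1 - n2)%Z)). apply Rmult_le_pos; [apply Rmult_le_pos|]; auto. Qed.

Lemma abs_S1_term s a1 a2 a3 n n1 n2 :
  Rabs (S1_term s a1 a2 a3 n n1 n2) = wt s n n1 n2 * cc a1 a2 a3 n n1 n2.
Proof.
  rewrite S1_term_wt. unfold cc. rewrite !Rabs_mult.
  rewrite (Rabs_right (wt s n n1 n2)) by (apply Rle_ge, wt_nonneg). ring.
Qed.

Lemma S_bound r a1 a2 a3 A1 A2 A3 n K : 0 < r ->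
  (forall N, zsum N (fun n => rpow (Rabs (a1 n)) r) <= A1) ->
  (forall N, zsum N (fun n => rpow (Rabs (a2 n)) r) <= A2) ->
  (forall N, zsum N (fun n => rpow (Rabs (a3 n)) r) <= A3) ->
  zsum2 K (fun n1 n2 => rpow (cc a1 a2 a3 n n1 n2) r) <= A1 * A2 * A3.
Proof.
  intros Hr H1 H2 H3.
  set (f1 := fun y => rpow (Rabs (a1 y)) r). set (f2 := fun y => rpow (Rabs (a2 y)) r).
  set (f3 := fun y => rpow (Rabs (a3 y)) r).
  assert (B1 : Bnd f1 A1) by (apply Bnd_of; auto; intros; apply rpow_nonneg).
  assert (B2 : Bnd f2 A2) by (apply Bnd_of; auto; intros; apply rpow_nonneg).
  assert (Hf3 : forall y, f3 y <= A3).
  { intros y. eapply Rle_trans; [apply (zsum_single f3 (Z.abs_nat y) y)|]; auto.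
    intros; apply rpow_nonneg. }
  assert (HA3 : 0 <= A3) by (eapply Rle_trans; [apply rpow_nonneg| apply (Hf3 0%Z)]).
  eapply Rle_trans.
  - apply zsum2_le with (h := fun n1 n2 => A3 * (f1 n1 * f2 n2)).
    intros n1 n2. unfold cc. rewrite !rpow_mult by (try apply Rmult_le_pos; apply Rabs_pos).
    fold (f1 n1) (f2 n2) (f3 (n - n1 - n2)%Z).
    pose proof (Hf3 (n - n1 - n2)%Z). assert (0 <= f1 n1 * f2 n2) by (apply Rmult_le_pos; apply rpow_nonneg).
    nra.
  - rewrite zsum2_scal. pose proof (L12 K _ _ _ _ B1 B2). nra.
Qed.

Lemma S_sum_bound r a1 a2 a3 A1 A2 A3 N K : 0 < r ->
  (forall N, zsum N (fun n => rpow (Rabs (a1 n)) r) <= A1) ->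
  (forall N, zsum N (fun n => rpow (Rabs (a2 n)) r) <= A2) ->
  (forall N, zsum N (fun n => rpow (Rabs (a3 n)) r) <= A3) ->
  zsum N (fun n => zsum2 K (fun n1 n2 => rpow (cc a1 a2 a3 n n1 n2) r)) <= A1 * A2 * A3.
Proof.
  intros Hr H1 H2 H3.
  set (f1 := fun y => rpow (Rabs (a1 y)) r). set (f2 := fun y => rpow (Rabs (a2 y)) r).
  set (f3 := fun y => rpow (Rabs (a3 y)) r).
  assert (B1 : Bnd f1 A1) by (apply Bnd_of; auto; intros; apply rpow_nonneg).
  assert (B2 : Bnd f2 A2) by (apply Bnd_of; auto; intros; apply rpow_nonneg).
  assert (B3 : Bnd f3 A3) by (apply Bnd_of; auto; intros; apply rpow_nonneg).
  assert (HA3 : 0 <= A3) by (apply (Bnd_nonneg _ _ B3)).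
  assert (E : forall n n1 n2, rpow (cc a1 a2 a3 n n1 n2) r = f1 n1 * f2 n2 * f3 (n - n1 - n2)%Z).
  { intros. unfold cc. rewrite !rpow_mult by (try apply Rmult_le_pos; apply Rabs_pos). reflexivity. }
  unfold zsum2. rewrite zsum_swap.
  eapply Rle_trans.
  - apply zsum_le. intros n1. rewrite zsum_swap.
    apply zsum_le with (g := fun n2 => A3 * (f1 n1 * f2 n2)).
    intros n2.
    rewrite (zsum_ext N _ (fun n => (f1 n1 * f2 n2) * f3 (n + (- n1 - n2))%Z))
      by (intros; rewrite E; f_equal; f_equal; lia).
    rewrite zsum_scal. destruct B3 as [_ B3]. pose proof (B3 N (- n1 - n2)%Z).
    assert (0 <= f1 n1 * f2 n2) by (apply Rmult_le_pos; apply rpow_nonneg). nra.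
  - pose proof (L12 K _ _ _ _ B1 B2). unfold zsum2 in H.
    rewrite (zsum_ext K _ (fun a => A3 * zsum K (fun b => f1 a * f2 b)))
      by (intros; rewrite <- zsum_scal; reflexivity).
    rewrite zsum_scal. nra.
Qed.


Lemma zsum2_abs K (T : Z -> Z -> R) : Rabs (zsum2 K T) <= zsum2 K (fun a b => Rabs (T a b)).
Proof.
  unfold zsum2, zsum. eapply Rle_trans; [apply Rsum_abs|].
  apply sum_Rle; intros. apply Rsum_abs.
Qed.

Lemma Q_eq s a1 a2 a3 n K :
  zsum2 K (fun a b => Rabs (S1_term s a1 a2 a3 n a b)) = zsum2 K (fun a b => wt s n a b * cc a1 a2 a3 n a b).
Proof. unfold zsum2; apply zsum_ext; intros; apply zsum_ext; intros. apply abs_S1_term. Qed.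

Lemma main_fin s r Lam : 1 <= r -> 0 <= Lam ->
  (forall a1 a2 a3 n K,
     rpow (zsum2 K (fun n1 n2 => wt s n n1 n2 * cc a1 a2 a3 n n1 n2)) r
       <= Lam * zsum2 K (fun n1 n2 => rpow (cc a1 a2 a3 n n1 n2) r)) ->
  forall a1 a2 a3 M1 M2 M3,
    lp_le (Fin r) a1 M1 -> lp_le (Fin r) a2 M2 -> lp_le (Fin r) a3 M3 ->
    exists b, S1_is s a1 a2 a3 b /\ lp_le (Fin r) b (rpow Lam (/ r) * (M1 * M2 * M3)).
Proof.
  intros Hr HLam Hhol a1 a2 a3 M1 M2 M3 H1 H2 H3.
  apply lp_fin_extract in H1; auto. apply lp_fin_extract in H2; auto. apply lp_fin_extract in H3; auto.
  destruct H1 as [HM1 H1]. destruct H2 as [HM2 H2]. destruct H3 as [HM3 H3].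
  assert (Hr0 : 0 < r) by lra.
  set (A := rpow M1 r * rpow M2 r * rpow M3 r).
  assert (HA : 0 <= A) by (unfold A; pose proof (rpow_nonneg M1 r); pose proof (rpow_nonneg M2 r);
                          pose proof (rpow_nonneg M3 r); apply Rmult_le_pos; [apply Rmult_le_pos|]; auto).
  set (Sk := fun n K => zsum2 K (fun n1 n2 => rpow (cc a1 a2 a3 n n1 n2) r)).
  assert (HSk : forall n K, Sk n K <= A) by (intros; apply S_bound; auto).
  assert (HSk0 : forall n K, 0 <= Sk n K) by (intros; apply zsum2_nonneg; intros; apply rpow_nonneg).
  assert (HQ : forall n K, zsum2 K (fun a b => Rabs (S1_term s a1 a2 a3 n a b)) <= rpow (Lam * Sk n K) (/ r)).
  { intros n K. rewrite Q_eq. apply rpow_inv_le; auto.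
    apply zsum2_nonneg; intros; apply Rmult_le_pos; [apply wt_nonneg| apply cc_nonneg]. }
  assert (HQ' : forall n K, zsum2 K (fun a b => Rabs (S1_term s a1 a2 a3 n a b)) <= rpow (Lam * A) (/ r)).
  { intros n K. eapply Rle_trans; [apply HQ|]. apply rpow_le; [|apply Rinv_0_lt_compat; auto].
    split; [apply Rmult_le_pos; auto| apply Rmult_le_compat_l; auto]. }
  set (b := fun n => proj1_sig (conv_abs (S1_term s a1 a2 a3 n) _ (HQ' n))).
  assert (Hb : forall n, Un_cv (fun K => zsum2 K (S1_term s a1 a2 a3 n)) (b n))
    by (intros; unfold b; apply proj2_sig).
  set (Cn := fun n => proj1_sig (mono_cv (Sk n) A (HSk0 n)
                         (fun K => zsum2_mono K (S K) _ (fun a b => rpow_nonneg _ _) (Nat.le_succ_diag_r K))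
                         (HSk n))).
  assert (HC : forall n, Un_cv (Sk n) (Cn n)) by (intros; unfold Cn; apply proj2_sig).
  assert (HCge : forall n K, Sk n K <= Cn n).
  { intros n K. apply (growing_ineq (Sk n)); auto. intros K'. 
    apply zsum2_mono; [intros; apply rpow_nonneg| lia]. }
  assert (HC0 : forall n, 0 <= Cn n) by (intros; eapply Rle_trans; [apply (HSk0 n 0%nat)| apply HCge]).
  exists b. split.
  - intros n. split; [exists (rpow (Lam * A) (/ r)); apply HQ'| apply Hb].
  - simpl. intros N.
    assert (Hbn : forall n, rpow (Rabs (b n)) r <= Lam * Cn n).
    { intros n.
      assert (Rabs (b n) <= rpow (Lam * Cn n) (/ r)).
      { apply (lim_abs_le _ _ _ (Hb n)). intros K.
        eapply Rle_trans; [apply zsum2_abs|]. eapply Rle_trans; [apply HQ|].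
        apply rpow_le; [|apply Rinv_0_lt_compat; auto].
        split; [apply Rmult_le_pos; auto| apply Rmult_le_compat_l; auto]. }
      rewrite <- (rpow_inv_r (Lam * Cn n) r) by (auto; apply Rmult_le_pos; auto).
      apply rpow_le; auto. split; [apply Rabs_pos| auto]. }
    assert (HsumC : zsum N Cn <= A).
    { apply (lim_le (fun K => zsum N (fun n => Sk n K))).
      - apply zsum_cv. auto.
      - intros K. unfold Sk. apply S_sum_bound; auto. }
    set (Zb := zsum N (fun n => rpow (Rabs (b n)) r)).
    assert (HZ : Zb <= Lam * A).
    { unfold Zb. eapply Rle_trans; [apply zsum_le; apply Hbn|].
      rewrite zsum_scal. apply Rmult_le_compat_l; auto. }
    assert (HZ0 : 0 <= Zb) by (apply zsum_nonneg; intros; apply rpow_nonneg).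
    eapply Rle_trans; [apply rpow_le; [split; [apply HZ0| apply HZ]| apply Rinv_0_lt_compat; auto]|].
    rewrite rpow_mult by auto. unfold A.
    assert (0 <= rpow M1 r) by apply rpow_nonneg. assert (0 <= rpow M2 r) by apply rpow_nonneg. assert (0 <= rpow M3 r) by apply rpow_nonneg.
    rewrite !rpow_mult by (try apply Rmult_le_pos; auto).
    rewrite !rpow_r_inv by auto. lra.
Qed.

Lemma main_inf s W : 0 <= W ->
  (forall n K, zsum2 K (fun n1 n2 => wt s n n1 n2) <= W) ->
  forall a1 a2 a3 M1 M2 M3,
    lp_le Infty a1 M1 -> lp_le Infty a2 M2 -> lp_le Infty a3 M3 ->
    exists b, S1_is s a1 a2 a3 b /\ lp_le Infty b (W * (M1 * M2 * M3)).
Proof.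
  intros HW HWb a1 a2 a3 M1 M2 M3 H1 H2 H3. simpl in H1, H2, H3.
  assert (HM1 : 0 <= M1) by (eapply Rle_trans; [apply Rabs_pos| apply (H1 0%Z)]).
  assert (HM2 : 0 <= M2) by (eapply Rle_trans; [apply Rabs_pos| apply (H2 0%Z)]).
  assert (HM3 : 0 <= M3) by (eapply Rle_trans; [apply Rabs_pos| apply (H3 0%Z)]).
  set (M := M1 * M2 * M3).
  assert (HM : 0 <= M) by (unfold M; apply Rmult_le_pos; [apply Rmult_le_pos|]; auto).
  assert (Hcc : forall n n1 n2, cc a1 a2 a3 n n1 n2 <= M).
  { intros. unfold cc, M. pose proof (Rabs_pos (a1 n1)). pose proof (Rabs_pos (a2 n2)).
    pose proof (Rabs_pos (a3 (n - n1 - n2)%Z)).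
    apply Rmult_le_compat; [apply Rmult_le_pos; auto| auto| |auto].
    apply Rmult_le_compat; auto. }
  assert (HQ : forall n K, zsum2 K (fun a b => Rabs (S1_term s a1 a2 a3 n a b)) <= W * M).
  { intros n K. rewrite Q_eq. eapply Rle_trans.
    - apply zsum2_le with (h := fun a b => M * wt s n a b). intros.
      cbv beta. rewrite (Rmult_comm M). apply Rmult_le_compat_l; [apply wt_nonneg| apply Hcc].
    - rewrite zsum2_scal. apply Rle_trans with (M * W); [apply Rmult_le_compat_l; [auto| apply HWb]| lra]. }
  set (b := fun n => proj1_sig (conv_abs (S1_term s a1 a2 a3 n) _ (HQ n))).
  assert (Hb : forall n, Un_cv (fun K => zsum2 K (S1_term s a1 a2 a3 n)) (b n))
    by (intros; unfold b; apply proj2_sig).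
  exists b. split.
  - intros n. split; [exists (W * M); apply HQ| apply Hb].
  - simpl. intros n. apply (lim_abs_le _ _ _ (Hb n)). intros K.
    eapply Rle_trans; [apply zsum2_abs| apply HQ].
Qed.


Lemma Wq_pos s q : 1 < q * (s + /4) -> 0 < Wq s q.
Proof.
  intros H. unfold Wq. pose proof (Dd_pos _ H). pose proof (exp_pos (q * cst s)).
  assert (0 <= exp (q * cst s) * (3 * (4 * Dd (q * (s + /4))) * (4 * Dd (q * (s + /4))))).
  { apply Rmult_le_pos; [lra|]. apply Rmult_le_pos; [|lra]. apply Rmult_le_pos; lra. }
  lra.
Qed.

Theorem proposition3p4 (s : R) (p : expo) :
  s >= 1/4 ->
  valid_expo p ->
  expo_mul_gt1 (conj_expo p) (s + 1/4) ->
  exists C : R,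
    forall (a1 a2 a3 : Z -> R) (M1 M2 M3 : R),
      lp_le p a1 M1 -> lp_le p a2 M2 -> lp_le p a3 M3 ->
      exists b : Z -> R,
        S1_is s a1 a2 a3 b /\ lp_le p b (C * (M1 * M2 * M3)).
Proof.
  intros Hs Hp Hc. destruct p as [r|].
  - simpl in Hp. unfold conj_expo in Hc. destruct (Req_EM_T r 1) as [Hr1|Hr1].
    + subst r. exists (rpow (exp (cst s)) (/ 1)). intros a1 a2 a3 M1 M2 M3 H1 H2 H3.
      apply main_fin; auto; [left; apply exp_pos|].
      intros b1 b2 b3 n K.
      rewrite rpow_1 by (apply zsum2_nonneg; intros; apply Rmult_le_pos; [apply wt_nonneg| apply cc_nonneg]).
      rewrite <- zsum2_scal. apply zsum2_le. intros n1 n2.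
      rewrite rpow_1 by apply cc_nonneg.
      apply Rmult_le_compat_r; [apply cc_nonneg| apply wt_bound; auto].
    + simpl in Hc.
      assert (Hr : 1 < r) by lra.
      set (q := r / (r - 1)) in *.
      assert (Hq : 0 < q) by (unfold q; apply Rdiv_lt_0_compat; lra).
      assert (Hal : 1 < q * (s + /4)) by (replace (/4) with (1/4) by lra; unfold q in *; lra).
      set (Lam := rpow (Wq s q) (r - 1)).
      exists (rpow Lam (/ r)). intros a1 a2 a3 M1 M2 M3 H1 H2 H3.
      apply main_fin; [lra| apply rpow_nonneg| |exact H1|exact H2|exact H3].
      intros b1 b2 b3 n K. unfold Lam.
      apply holder2 with (q := q); auto; try lra.
      * unfold q. field; lra.
      * apply Wq_pos; auto.
      * intros; apply wt_nonneg.
      * intros; apply cc_nonneg.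
      * apply Wq_bound; auto.
  - simpl in Hc. 
    assert (Hal : 1 < 1 * (s + /4)) by (replace (/4) with (1/4) by lra; lra).
    exists (Wq s 1). intros a1 a2 a3 M1 M2 M3 H1 H2 H3.
    apply main_inf; auto.
    + left; apply Wq_pos; auto.
    + intros n K. eapply Rle_trans; [|apply (Wq_bound s 1 n K); auto; lra].
      right. unfold zsum2; apply zsum_ext; intros; apply zsum_ext; intros.
      rewrite rpow_1; auto. apply wt_nonneg.
Qed.
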